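(* Let $\Pi_q$ be a projective plane (not necessarily Desarguesian) of order $q\ge 2$, and let $s(2,q)$ denote the smallest size of a saturating set in $\Pi_q$. Then \[ s(2,q)\leq 2\sqrt{(q+1)\ln (q+1)}+2 . \]
   Context: A point set $S\subset \Pi_q$ is saturating if every point of $\Pi_q\setminus S$ is collinear with two points of $S$. Here $\ln$ denotes the natural logarithm. *)

(* Defs.v *)
From mathcomp Require Import all_boot.
Set Implicit Arguments. Unset Strict Implicit. Unset Printing Implicit Defensive.

Definition is_projective_plane (P L : finType) (inc : P -> L -> bool) (q : nat)
  : Prop :=
  (forall p1 p2 : P, p1 != p2 -> exists! l : L, inc p1 l && inc p2 l) /\
  (forall l1 l2 : L, l1 != l2 -> exists! p : P, inc p l1 && inc p l2) /\
  (* non-degeneracy: four distinct points, no three collinear *)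
  (exists a b c d : P, uniq [:: a; b; c; d] /\
     forall l : L, (inc a l + inc b l + inc c l + inc d l <= 2)%N) /\
  (forall l : L, #|[set p : P | inc p l]| = q.+1).

Definition saturating (P L : finType) (inc : P -> L -> bool) (S : {set P})
  : Prop :=
  forall p : P, p \notin S ->
    exists x y : P, [/\ x \in S, y \in S, x != y &
      exists l : L, [&& inc p l, inc x l & inc y l]].

(* Main.v *)
Require Import Defs.
From mathcomp Require Import all_boot.
From Stdlib Require Import Reals.
From mathcomp Require Import zify_ssreflect.
From Stdlib Require Import Lra Lia Psatz ZArith.
Delimit Scope nat_scope with N.
Delimit Scope R_scope with R.
Section RealPart.
Local Open Scope R_scope.

Lemma exp_pow_nat (x : R) (n : nat) : exp (INR n * x) = exp x ^ n.
Proof.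
elim: n => [|n IH]; first by rewrite /= Rmult_0_l exp_0.
rewrite S_INR Rmult_plus_distr_r Rmult_1_l exp_plus IH /=; ring.
Qed.

Lemma ln4_le : ln 4 <= 3/2.
Proof.
have h1 : 1 + 3/20 <= exp (3/20) by apply: exp_ineq1_le.
have h2 : exp (3/2) = exp (3/20) ^ 10.
  rewrite -exp_pow_nat; congr exp; simpl; lra.
have h3 : (1 + 3/20) ^ 10 <= exp (3/20) ^ 10.
  apply: pow_incr; lra.
have h4 : 4 <= exp (3/2) by rewrite h2; simpl in h3 |- *; lra.
rewrite -(ln_exp (3/2)).
case: (Rle_lt_or_eq_dec _ _ h4) => h; last by rewrite h; lra.
by apply/Rlt_le/ln_increasing; lra.
Qed.

Lemma ln3_gt : 2/3 < ln 3.
Proof.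
have he := exp_le_3.
have h2 : exp 2 = exp (2/3) ^ 3 by rewrite -exp_pow_nat; congr exp; simpl; lra.
have h3 : exp 2 = exp 1 ^ 2 by rewrite -exp_pow_nat; congr exp; simpl; lra.
have hp : 0 < exp 1 := exp_pos 1.
have hq : 0 < exp (2/3) := exp_pos _.
have h4 : exp (2/3) < 3.
  apply: Rnot_le_lt => h.
  have : 3 ^ 3 <= exp (2/3) ^ 3 by apply: pow_incr; lra.
  rewrite -h2 h3 /=. nra.
rewrite -(ln_exp (2/3)). by apply: ln_increasing.
Qed.

Lemma ln_le_lin (m : R) : 3 <= m -> ln m <= m/4 + 1/2.
Proof.
move=> hm.
have h1 := exp_ineq1_le (ln (m/4)).
rewrite exp_ln in h1; last lra.
have : ln m = ln 4 + ln (m/4).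
  rewrite -ln_mult; [congr ln; field| lra| lra].
have := ln4_le. lra.
Qed.

Lemma ln_ge3 (m : R) : 3 <= m -> 2/3 < ln m.
Proof.
move=> hm; have := ln3_gt.
case: (Rle_lt_or_eq_dec _ _ hm) => h; last by rewrite -h.
have := ln_increasing 3 m ltac:(lra) h. lra.
Qed.

Definition FF (Q M K : R) := K * (K + 1) / (2 * M) - K * (K - 1) / (2 * Q * M).

Lemma FF_key (Q K : R) : 2 <= Q ->
  2 * sqrt ((Q + 1) * ln (Q + 1)) <= K ->
  ln (Q * (Q + 1)) < FF Q (Q + 1) K.
Proof.
move=> hQ hK.
set M := Q + 1. set L := ln M.
have hL : 2/3 < L by apply: ln_ge3; rewrite /M; lra.
have hL2 : L <= M/4 + 1/2 by apply: ln_le_lin; rewrite /M; lra.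
set x := 2 * sqrt (M * L).
have hML : 0 <= M * L by rewrite /M; nra.
have hs := sqrt_pos (M * L).
have hsq : sqrt (M * L) * sqrt (M * L) = M * L by apply: sqrt_sqrt.
have hkey : 2 * L - 2/3 < sqrt (M * L).
  case: (Rle_lt_dec (2 * L - 2/3) 0) => h; first lra.
  apply: Rnot_le_lt => h'.
  have : sqrt (M * L) * sqrt (M * L) <= (2 * L - 2/3) * (2 * L - 2/3).
    by apply: Rmult_le_compat; lra.
  rewrite hsq => h''. nra.
have hlnQ : ln Q <= L - 1/M.
  have h1 := exp_ineq1_le (ln (Q/M)).
  rewrite exp_ln in h1; last (rewrite /M; apply: Rdiv_lt_0_compat; lra).
  have : ln Q = L + ln (Q / M).
    rewrite /L -ln_mult; [congr ln; rewrite /M; field; lra| rewrite /M; lra|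
      rewrite /M; apply: Rdiv_lt_0_compat; lra].
  have : Q / M = 1 - 1 / M by rewrite /M; field; lra.
  lra.
have hln : ln (Q * M) = ln Q + L by rewrite /L ln_mult; lra.
have hM : 0 < M by rewrite /M; lra.
have hQM : 0 < Q * M by nra.
have hKx : x <= K by [].
have hx0 : 0 <= x by rewrite /x; lra.
have hmono : FF Q M x <= FF Q M K.
  have -> : FF Q M K = FF Q M x
            + (K - x) * ((K + x + 1) * Q - (K + x - 1)) / (2 * Q * M).
    rewrite /FF; field; lra.
  have : 0 <= (K - x) * ((K + x + 1) * Q - (K + x - 1)) / (2 * Q * M).
    rewrite /Rdiv; apply: Rmult_le_pos.
    apply: Rmult_le_pos; [lra | nra].
    by apply/Rlt_le/Rinv_0_lt_compat; nra.
  lra.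
have hx2 : x * x = 4 * M * L by rewrite /x; nra.
have hFx : FF Q M x = 2 * L - 2 * L / Q + x / (2 * Q).
  rewrite /FF.
  have -> : x * (x + 1) / (2 * M) - x * (x - 1) / (2 * Q * M)
          = ((x * x) * (Q - 1) + x * (Q + 1)) / (2 * Q * M) by field; lra.
  rewrite hx2 /M; field; lra.
have hfin : 2 * L - 1 / M < FF Q M x.
  rewrite hFx.
  have hQM' : Q / M >= 2/3.
    apply: Rle_ge; apply: (Rmult_le_reg_r M); first lra.
    have e : Q / M * M = Q by field; lra.
    rewrite e /M; lra.

  have : 2 * L - 1 / M = 2 * L - 2 * L / Q + (2 * L - Q/M) / Q
    by field; lra.
  move=> ->.
  have e2 : x / (2 * Q) - (2 * L - Q / M) / Q = (x / 2 - 2 * L + Q / M) * / Q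
    by field; lra.
  have : 0 < (x / 2 - 2 * L + Q / M) * / Q.
    apply: Rmult_lt_0_compat; last by apply: Rinv_0_lt_compat; lra.
    rewrite /x; lra.
  lra.
lra.
Qed.


Lemma div_le_helper (a b c d : R) : 0 < b -> 0 < d -> a * d <= c * b -> a / b <= c / d.
Proof.
move=> hb hd h.
have e : c / d - a / b = (c * b - a * d) * / (b * d) by field; lra.
have : 0 <= (c * b - a * d) * / (b * d).
  apply: Rmult_le_pos; first lra.
  by apply/Rlt_le/Rinv_0_lt_compat; nra.
lra.
Qed.

Definition rr (q m j : nat) : R :=
  if (j < m)%N then (INR q * (INR m - INR j)) / (INR q * INR m + 1 - INR j) else 0.

Fixpoint BB (q m i : nat) : R :=
  match i with 0 => INR q * INR m + 1 | S i => BB q m i * rr q m i end.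

Lemma rr_nonneg q m j : (1 <= q)%N -> 0 <= rr q m j.
Proof.
move=> hq; rewrite /rr; case: ifP => hj; last lra.
have hq' : 1 <= INR q by apply: (le_INR 1); apply/leP.
have hjm : INR j + 1 <= INR m by rewrite -S_INR; apply: le_INR; apply/leP.
have hj0 := pos_INR j.
rewrite /Rdiv; apply: Rmult_le_pos; first nra.
by apply/Rlt_le/Rinv_0_lt_compat; nra.
Qed.

Lemma BB_nonneg q m i : (1 <= q)%N -> 0 <= BB q m i.
Proof.
move=> hq; elim: i => [|i IH] /=.
  have := pos_INR q; have := pos_INR m; nra.
by apply: Rmult_le_pos => //; apply: rr_nonneg.
Qed.

Lemma BB_zero q m i : (m < i)%N -> BB q m i = 0.
Proof.
elim: i => [//|i IH] hi /=.
case: (ltngtP m i) => h.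
- by rewrite IH // Rmult_0_l.
- by move: hi; rewrite ltnS leqNgt h.
- by rewrite /rr h ltnn Rmult_0_r.
Qed.

Lemma BB_bound q m K : (1 <= q)%N -> (K < m)%N ->
  BB q m (S K) <= INR q * INR m * exp (- FF (INR q) (INR m) (INR K)).
Proof.
move=> hq.
have hq' : 1 <= INR q by apply: (le_INR 1); apply/leP.
elim: K => [|K IH] hK.
  rewrite /= /rr hK /FF.
  have hm : 1 <= INR m by apply: (le_INR 1); apply/leP.
  have -> : - (0 * (0 + 1) / (2 * INR m) - 0 * (0 - 1) / (2 * INR q * INR m)) = 0
    by field; lra.
  rewrite exp_0 Rmult_1_r; apply: Req_le; simpl; field; nra.
have hK' : (K < m)%N by apply: ltn_trans hK.
have IH' := IH hK'.
change (BB q m (S (S K))) with (BB q m (S K) * rr q m (S K)).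
set Q := INR q. set M := INR m. set J := INR (S K).
have hJ : J = INR K + 1 by rewrite /J S_INR.
have hJM : J + 1 <= M by rewrite /J /M -S_INR; apply: le_INR; apply/leP.
have hK0 := pos_INR K.
have hQ1 : 1 <= Q by [].
have hM1 : 2 <= M by lra.
set t := J / M - (J - 1) / (Q * M).
have hr : rr q m (S K) <= 1 - t.
  rewrite /rr hK -/Q -/M -/J.
  have -> : 1 - t = (Q * M - Q * J + J - 1) / (Q * M).
    rewrite /t; field; split; lra.
  apply: div_le_helper; [nra | nra |].
  have hA : 0 <= J - 1 by lra.
  have : 0 <= (J - 1) * (Q * J - J + 1) by apply: Rmult_le_pos; nra.
  nra.
have het : 1 - t <= exp (- t) by have := exp_ineq1_le (- t); lra.
have hFF : FF Q M J = FF Q M (INR K) + t by rewrite /FF /t hJ; field; nra.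
rewrite hFF Ropp_plus_distr exp_plus.
have h0 := BB_nonneg q m K.+1 hq.
have h1 := rr_nonneg q m (S K) hq.
have h2 := exp_pos (- FF Q M (INR K)).
have h3 := exp_pos (- t).
have : BB q m K.+1 * rr q m K.+1 <= (Q * M * exp (- FF Q M (INR K))) * exp (- t).
  apply: Rmult_le_compat => //; lra.
lra.
Qed.

Lemma BB_lt1 q K : (2 <= q)%N ->
  2 * sqrt (INR (q + 1) * ln (INR (q + 1))) <= INR K ->
  BB q (q + 1) (S K) < 1.
Proof.
move=> hq hK.
case: (ltnP K (q + 1)) => hKm; last first.
  rewrite BB_zero; [lra | by rewrite ltnS].
have hq1 : (1 <= q)%N by apply: leq_trans hq.
apply: (Rle_lt_trans _ _ _ (BB_bound q (q + 1) K hq1 hKm)).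
have hQ : 2 <= INR q by apply: (le_INR 2); apply/leP.
rewrite plus_INR /= in hK *.
have hF := FF_key (INR q) (INR K) hQ hK.
set F := FF _ _ _ in hF *.
have hQM : 0 < INR q * (INR q + 1) by nra.
have he : INR q * (INR q + 1) < exp F.
  rewrite -(exp_ln (INR q * (INR q + 1))) //; by apply: exp_increasing.
have e : exp (- F) = / exp F by rewrite exp_Ropp.
rewrite e.
have hpos := exp_pos F.
apply: (Rmult_lt_reg_r (exp F)) => //.
rewrite Rmult_assoc Rinv_l; lra.
Qed.

Lemma step_real (u u' d c N Q I B : R) :
  0 <= u -> u <= B -> 0 <= u' -> 0 < d -> d = N - I -> c = N - 1 - I * Q -> 0 <= c ->
  u' * d <= u * c -> N <= Q * (Q + 1) + 1 -> I + 1 <= Q + 1 -> 1 <= Q -> 0 <= I ->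
  u' <= B * (Q * ((Q + 1) - I) / (Q * (Q + 1) + 1 - I)).
Proof.
move=> hu huB hu' hd ed ec hc h hN hI hQ hI0.
set D := Q * (Q + 1) + 1 - I.
have hD : 0 < D by rewrite /D; nra.
have key : c * D <= Q * ((Q + 1) - I) * d.
  rewrite ec ed /D.
  have a : 0 <= 1 + I * Q - I by nra.
  have b : 0 <= Q * (Q + 1) + 1 - N by lra.
  have := Rmult_le_pos _ _ a b.
  nra.
have h1 : u' * d * D <= u * (Q * ((Q + 1) - I)) * d.
  have : u' * d * D <= u * c * D by apply: Rmult_le_compat_r; lra.
  have : u * (c * D) <= u * (Q * ((Q + 1) - I) * d) by apply: Rmult_le_compat_l.
  nra.
have h2 : u' * D <= u * (Q * ((Q + 1) - I)).
  apply: (Rmult_le_reg_r d) => //; nra.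
have h3 : u * (Q * ((Q + 1) - I)) <= B * (Q * ((Q + 1) - I)).
  apply: Rmult_le_compat_r => //; nra.
have e : B * (Q * ((Q + 1) - I) / D) = B * (Q * ((Q + 1) - I)) / D by rewrite /Rdiv; ring.
rewrite e.
apply: (Rmult_le_reg_r D) => //.
have -> : B * (Q * (Q + 1 - I)) / D * D = B * (Q * (Q + 1 - I)) by field; lra.
lra.
Qed.

End RealPart.

Set Implicit Arguments. Unset Strict Implicit. Unset Printing Implicit Defensive.

Lemma card_bigcup_le (T I : finType) (A : {pred I}) (F : I -> {set T}) :
  (#|\bigcup_(i in A) F i| <= \sum_(i in A) #|F i|)%N.
Proof.
elim/big_ind2: _ => //; first by rewrite cards0.
move=> X n Y m h1 h2; rewrite cardsU.
apply: leq_trans (leq_subr _ _) _; exact: leq_add.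
Qed.

Lemma disjP' (T : finType) (A B : {set T}) :
  (forall y, y \in A -> y \in B -> False) -> [disjoint A & B].
Proof.
move=> h; rewrite disjoint_subset; apply/subsetP => y hy; rewrite inE.
by apply/negP => hb; apply: h hy hb.
Qed.

Definition satb (P L : finType) (inc : P -> L -> bool) (S : {set P}) (p : P) : bool :=
  [exists x : P, [exists y : P, [exists l : L,
     [&& x \in S, y \in S, x != y, inc p l, inc x l & inc y l]]]].

Definition Uset (P L : finType) (inc : P -> L -> bool) (S : {set P}) : {set P} :=
  [set p | (p \notin S) && ~~ satb inc S p].

Section Comb.
Variables (P L : finType) (inc : P -> L -> bool) (q : nat).
Hypothesis hpp : is_projective_plane inc q.

Lemma line_uniq p1 p2 l l' : p1 != p2 -> inc p1 l -> inc p2 l ->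
  inc p1 l' -> inc p2 l' -> l = l'.
Proof.
move=> hne h1 h2 h1' h2'; case: hpp => [h _].
case: (h p1 p2 hne) => l0 [_ hu].
by rewrite -(hu l) ?h1 ?h2 // -(hu l') ?h1' ?h2'.
Qed.

Lemma line_ex p1 p2 : p1 != p2 -> exists l, inc p1 l && inc p2 l.
Proof.
move=> hne; case: hpp => [h _]; case: (h p1 p2 hne) => l0 [h0 _]; by exists l0.
Qed.

Lemma lines_meet l1 l2 : l1 != l2 -> exists p, inc p l1 && inc p l2.
Proof.
move=> hne; case: hpp => [_ [h _]]; case: (h l1 l2 hne) => p0 [h0 _]; by exists p0.
Qed.

Lemma card_line l : #|[set p | inc p l]| = q.+1.
Proof. by case: hpp => [_ [_ [_ h]]]. Qed.

Lemma satb_mono (S S' : {set P}) p : S \subset S' -> satb inc S p -> satb inc S' p.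
Proof.
move=> hS /existsP[x /existsP[y /existsP[l /and5P[hx hy hxy hp /andP[h1 h2]]]]].
apply/existsP; exists x; apply/existsP; exists y; apply/existsP; exists l.
by rewrite (subsetP hS _ hx) (subsetP hS _ hy) hxy hp h1 h2.
Qed.

Lemma U_mono (S : {set P}) x p : p \in Uset inc (x |: S) -> p \in Uset inc S.
Proof.
rewrite !inE => /andP[]; rewrite negb_or => /andP[_ ->] hs /=.
apply: contra hs; apply: satb_mono; exact: subsetUr.
Qed.

Definition Aset (p s : P) : {set P} :=
  [set y | (y != p) && [exists l, [&& inc p l, inc s l & inc y l]]].

Lemma Aset_card p s : s != p -> #|Aset p s| = q.
Proof.
move=> hsp; case: (line_ex hsp) => l0 /andP[hs hp].
have -> : Aset p s = [set y | inc y l0] :\ p.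
  apply/setP => y; rewrite !inE; case: (y =P p) => //= _.
  apply/existsP/idP => [[l /and3P[hpl hsl hyl]]|hy].
    by rewrite (line_uniq hsp hs hp hsl hpl).
  by exists l0; rewrite hp hs hy.
have := cardsD1 p [set y | inc y l0]; rewrite card_line inE hp /=.
by move=> [].
Qed.

Lemma count_G (S : {set P}) p : p \in Uset inc S ->
  (#|[set x | (x \notin S) && (p \in Uset inc (x |: S))]| + (1 + #|S| * q) <= #|P|)%N.
Proof.
move=> hpU.
have /andP[hpS hsat] : (p \notin S) && ~~ satb inc S p by rewrite inE in hpU.
pose F s := if s \in S then Aset p s else set0.
have hdisj : forall i j, i != j -> [disjoint F i & F j].
  move=> i j hij; rewrite /F.
  case hi: (i \in S); last by apply: disjP' => y; rewrite inE.
  case hj: (j \in S); last by apply: disjP' => y _; rewrite inE.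
  apply: disjP' => y; rewrite !inE => /andP[hyp /existsP[l /and3P[hpl hil hyl]]].
  move=> /andP[_ /existsP[l' /and3P[hpl' hjl' hyl']]].
  have ell : l = l' by apply: (line_uniq hyp) => //.
  subst l'.
  apply: (negP hsat); rewrite /satb; apply/existsP; exists i; apply/existsP; exists j.
  apply/existsP; exists l; by rewrite hi hj hij hpl hil hjl'.
set Cov := \bigcup_s F s.
have hcov : #|Cov| = (#|S| * q)%N.
  rewrite -sum1_card partition_disjoint_bigcup //.
  under eq_bigr => i _ do rewrite sum1_card.
  rewrite (bigID (fun i => i \in S)) /= [X in (_ + X)%N]big1; last first.
    by move=> i /negbTE hi; rewrite /F hi cards0.
  rewrite addn0 -sum_nat_const; apply: eq_bigr => i hi; rewrite /F hi Aset_card //.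
  by apply: contraNneq hpS => <-.
have hpC : p \notin Cov.
  apply/bigcupP => [[s _]]; rewrite /F; case: (s \in S); last by rewrite inE.
  by rewrite inE eqxx.
have hsub : [set x | (x \notin S) && (p \in Uset inc (x |: S))] \subset ~: (p |: Cov).
  apply/subsetP => x; rewrite !inE => /andP[hxS].
  rewrite negb_or => /andP[/andP[hpx _] hs].
  rewrite negb_or eq_sym hpx /=; apply/negP => /bigcupP [s _]; rewrite /F.
  case hsS: (s \in S); last by rewrite inE.
  rewrite inE => /andP[_ /existsP[l /and3P[hpl hsl hxl]]].
  apply: (negP hs); rewrite /satb; apply/existsP; exists x; apply/existsP; exists s.
  apply/existsP; exists l; rewrite !inE eqxx hsS orbT hpl hsl hxl /=.
  rewrite andbT; by apply: contraNneq hxS => ->.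
have h1 := subset_leq_card hsub.
have hc := cardsC (p |: Cov).
rewrite cardsU1 hpC hcov in hc.
lia.
Qed.

Lemma card_P : (#|P| <= q * q.+1 + 1)%N.
Proof.
case: hpp => [_ [_ [[a [b [c [d [hu hnd]]]]] _]]].
move: hu => /and4P[]; rewrite !inE !negb_or => /and3P[hab hac had] /andP[hbc hbd] hcd _.
case: (line_ex hbc) => l0 /andP[hb hc].
have ha : ~~ inc a l0.
  apply/negP => ha; have := hnd l0; rewrite ha hb hc.
  by case: (inc d l0).
pose Lp := [set l | inc a l].
pose g l := odflt a [pick z | inc z l && inc z l0].
have hg : forall l, l \in Lp -> inc (g l) l && inc (g l) l0.
  move=> l; rewrite inE => hal; rewrite /g.
  case: pickP => [z hz //|hnone].
  have hne : l != l0 by apply: contraNneq ha => <-.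
  case: (lines_meet hne) => z hz; by rewrite hnone in hz.
have hinj : {in Lp &, injective g}.
  move=> l1 l2 h1 h2 e.
  have /andP[g1 g1'] := hg _ h1; have /andP[g2 g2'] := hg _ h2.
  rewrite e in g1 g1'.
  have hza : g l2 != a by apply: contraNneq ha => <-.
  rewrite inE in h1 h2.
  rewrite inE in h2; exact: (line_uniq hza g1 h1 g2 h2).
have hLp : (#|Lp| <= q.+1)%N.
  rewrite -(card_in_imset hinj) -(card_line l0); apply: subset_leq_card.
  apply/subsetP => z /imsetP[l hl ->]; rewrite inE.
  by case/andP: (hg _ hl).
have hcov : [set~ a] \subset \bigcup_(l in Lp) ([set y | inc y l] :\ a).
  apply/subsetP => y; rewrite !inE => hya.
  case: (line_ex hya) => l /andP[hyl hal].
  by apply/bigcupP; exists l; rewrite !inE ?hal ?hya ?hyl.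
have h1 := subset_leq_card hcov.
have h2 := card_bigcup_le Lp (fun l => [set y | inc y l] :\ a).
have h3 : (\sum_(l in Lp) #|[set y | inc y l] :\ a| = #|Lp| * q)%N.
  rewrite -sum_nat_const; apply: eq_bigr => l; rewrite inE => hal.
  have := cardsD1 a [set y | inc y l]; rewrite card_line inE hal.
  by move=> [].
rewrite cardsC1 in h1.
have hP : (0 < #|P|)%N by apply/card_gt0P; exists a.
have h4 : (#|Lp| * q <= q.+1 * q)%N by apply: leq_mul.
lia.
Qed.

Lemma avg (S : {set P}) : Uset inc S != set0 ->
  exists x, x \notin S /\
   (#|Uset inc (x |: S)| * #|~: S| <= #|Uset inc S| * (#|P| - (1 + #|S| * q)))%N.
Proof.
case/set0Pn => p0 hp0.
have hp0S : p0 \in ~: S by move: hp0; rewrite !inE => /andP[].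
pose f x := #|Uset inc (x |: S)|.
case: (arg_minnP f hp0S) => x hx hmin.
exists x; split; first by rewrite -in_setC.
have e1 : (#|~: S| * f x = \sum_(y in ~: S) f x)%N by rewrite sum_nat_const.
have e2 : (\sum_(y in ~: S) f x <= \sum_(y in ~: S) f y)%N by apply: leq_sum => y hy; apply: hmin.
have e3 : (\sum_(y in ~: S) f y
   = \sum_p \sum_(y in ~: S) (p \in Uset inc (y |: S)))%N.
  rewrite exchange_big /=; apply: eq_bigr => y _.
  by rewrite /f -sum1_card big_mkcond /=; apply: eq_bigr => p _; case: (_ \in _).
have e4 : forall p, (\sum_(y in ~: S) (p \in Uset inc (y |: S))
   <= (if p \in Uset inc S then #|P| - (1 + #|S| * q) else 0))%N.
  move=> p.
  have -> : (\sum_(y in ~: S) (p \in Uset inc (y |: S))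
      = #|[set x | (x \notin S) && (p \in Uset inc (x |: S))]|)%N.
    rewrite -sum1_card big_mkcond /= [in RHS]big_mkcond /=.
    apply: eq_bigr => y _; rewrite !inE.
    by case: (y \in S) => //=; case: (p \in _).
  case: ifP => hpU.
    have := count_G hpU; lia.
  rewrite leqn0 cards_eq0; apply/eqP/setP => y; rewrite [y \in _]inE [y \in set0]inE.
  apply/negP => /andP[_ hy]; by rewrite (U_mono hy) in hpU.
have e5 : (\sum_p (if p \in Uset inc S then #|P| - (1 + #|S| * q) else 0)
   = #|Uset inc S| * (#|P| - (1 + #|S| * q)))%N.
  by rewrite -big_mkcond /= sum_nat_const.
rewrite mulnC -/(f x) e1.
apply: leq_trans e2 _; rewrite e3 -e5; apply: leq_sum => p _; exact: e4.
Qed.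


Lemma main_ind (i : nat) : (2 <= q)%N -> exists S : {set P},
  (#|S| = i /\ (INR #|Uset inc S| <= BB q (q + 1) i)%R) \/
  ((#|S| <= i)%N /\ Uset inc S = set0).
Proof.
move=> hq2; have hq1 : (1 <= q)%N by apply: leq_trans hq2.
have hP := card_P.
have hQ : (1 <= INR q)%R by apply: (le_INR 1); apply/leP.
elim: i => [|i [S [[hS hU]|[hS hU]]]].
- exists set0; left; split; first by rewrite cards0.
  have : (#|Uset inc set0| <= q * q.+1 + 1)%N by apply: leq_trans (max_card _) hP.
  move/leP/le_INR; rewrite /= plus_INR mult_INR S_INR plus_INR /=; lra.
2: by exists S; right; split; [lia | done].
- case: (eqVneq (Uset inc S) set0) => hU0.
    by exists S; right; split; [lia | done].
  case: (avg hU0) => x [hxS hx].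
  exists (x |: S); left; split; first by rewrite cardsU1 hxS hS.
  have hd := cardsC S.
  have hdpos : (0 < #|~: S|)%N.
    apply/card_gt0P; case/set0Pn: hU0 => p; rewrite !inE => /andP[hp _].
    by exists p; rewrite inE.
  rewrite hS in hx hd.
  rewrite [BB _ _ _]/=.
  have hrr := rr_nonneg q (q + 1) i hq1.
  have hBB := BB_nonneg q (q + 1) i hq1.
  have hu0 := pos_INR #|Uset inc S|.
  case: (posnP (#|P| - (1 + i * q))) => hc.
    rewrite hc muln0 leqn0 muln_eq0 (negbTE (lt0n_neq0 hdpos)) orbF in hx.
    rewrite (eqP hx) /=; apply: Rmult_le_pos => //.
  have him : (i < q + 1)%N by nia.
  rewrite /rr him.
  have Hc : ((#|P| - (1 + i * q)) + (1 + i * q) = #|P|)%N by lia.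
  have Hd : (#|~: S| + i = #|P|)%N by lia.
  move: hP hx Hc Hd. move NPe: #|P| => NP hP hx Hc Hd.
  move: hx => /leP/le_INR; rewrite !mult_INR => hx.
  have R1 := f_equal INR Hc; rewrite !plus_INR mult_INR /= in R1.
  have R2 := f_equal INR Hd; rewrite !plus_INR /= in R2.
  have R3 : (INR NP <= INR q * (INR q + 1) + 1)%R.
    move/leP/le_INR: hP; by rewrite plus_INR mult_INR S_INR.
  have R4 : (INR i + 1 <= INR q + 1)%R.
    rewrite -!S_INR; apply: le_INR; apply/leP; lia.
  rewrite plus_INR /=.
  apply: (@step_real (INR #|Uset inc S|) (INR #|Uset inc (x |: S)|) (INR #|~: S|)
     (INR (NP - (1 + i * q))) (INR NP)).
  all: try exact: pos_INR.
  all: try lra.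
  all: by apply: lt_0_INR; apply/ltP.
Qed.

Lemma sat_of_U (S : {set P}) : Uset inc S = set0 -> saturating inc S.
Proof.
move=> hU p hp.
have : p \notin Uset inc S by rewrite hU inE.
rewrite inE hp /= negbK => /existsP[x /existsP[y /existsP[l /and5P[hx hy hxy hpl /andP[hxl hyl]]]]].
exists x, y; split => //; exists l; by rewrite hpl hxl hyl.
Qed.

End Comb.

Theorem theorem1 (P L : finType) (inc : P -> L -> bool) (q : nat) :
  (2 <= q)%N -> is_projective_plane inc q ->
  exists S : {set P}, saturating inc S /\
    (INR #|S| <= 2 * sqrt (INR (q + 1) * ln (INR (q + 1))) + 2)%R.
Proof.
move=> hq hpp.
set x := (2 * sqrt (INR (q + 1) * ln (INR (q + 1))))%R.
have hx0 : (0 <= x)%R.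
  rewrite /x; have := sqrt_pos (INR (q + 1) * ln (INR (q + 1))); lra.
have [ha hb] := archimed x.
have hup : (0 < up x)%Z by apply: lt_0_IZR; lra.
set K := Z.to_nat (up x).
have hK : INR K = IZR (up x).
  by rewrite /K INR_IZR_INZ Z2Nat.id //; lia.
have hxK : (x <= INR K)%R by rewrite hK; lra.
have hK2 : (INR K.+1 <= x + 2)%R by rewrite S_INR hK; lra.
have [S hS] := main_ind hpp K.+1 hq.
exists S.
case: hS => [[hS hU]|[hS hU]].
- have hlt := BB_lt1 q K hq hxK.
  have hU0 : #|Uset inc S| = 0%N.
    case: (posnP #|Uset inc S|) => // hpos.
    have : (1 <= INR #|Uset inc S|)%R by apply: (le_INR 1); apply/leP.
    lra.
  split; first by apply: sat_of_U; apply/eqP; rewrite -cards_eq0 hU0.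
  by rewrite hS.
- split; first exact: sat_of_U.
  apply: Rle_trans hK2; apply: le_INR; exact/leP.
Qed.
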